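(* Fix $c_5\in(0,c_4)$ and put $c_6=c_4-c_5$. There is $c_7>0$ such that for all $\beta$ large enough, $$\sup_{E\Subset\Lambda}\ \sup_{o\in E}\ \sum_{J\in\mathcal J(E):\,o\in\mathrm{supp}\,J}e^{-\beta c_6\,\mathrm{size}\,J}\le e^{-\beta c_7}.$$ Furthermore, with $K(J)=e^{-\beta c_4\,\mathrm{size}\,J}$ and $a(J)=\beta c_5\eta|\mathrm{supp}\,J|$ for $J\in\mathcal J(E)$: for every finite $\tilde{\mathcal J}\subseteq\mathcal J(E)$, $$\sup_{E\Subset\Lambda}\sup_{o\in E}\sum_{J\in\tilde{\mathcal J}:\,o\in\mathrm{supp}\,J}K(J)e^{a(J)}\le e^{-\beta c_7},$$ and, for all $\beta$ large enough (uniformly in $E$ and $\tilde{\mathcal J}$), for every $I\in\tilde{\mathcal J}$, $$\sum_{J\in\tilde{\mathcal J}}K(J)\,1_{\{I\sim J\}}\,e^{a(J)}\le a(I).$$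
   Context: $\Gamma\subset\mathbb{R}^3$ is a rank-3 lattice, $\eta=\min\{|\gamma|:\gamma\in\Gamma\setminus\{0\}\}$. $(V_\Lambda,\Lambda)$ is a periodic lattice graph in $\mathbb{R}^3$ of bounded degree; edges carry counting directions and $s_{ve}\in\{1,-1,0\}$ is the signed incidence ($1$ if $v$ is the head of $e$, $-1$ if the tail, $0$ otherwise). For finite $E\subset\Lambda$ (written $E\Subset\Lambda$) with endpoint set $V$, $\mathcal I(E)=\{I\in\Gamma^E:\sum_es_{ve}I_e=0\ \forall v\in V\}$, $\|I\|_1=\sum_e|I_e|$, $\mathrm{supp}\,I=\{e:I_e\neq0\}$. A set of edges is connected if the graph formed by these edges (with their endpoints) is connected. $\mathcal J(E)=\{I\in\mathcal I(E):\mathrm{supp}\,I\text{ nonempty and connected}\}$. Two elements $I,J$ are incompatible, $I\sim J$, if some edge of $\mathrm{supp}\,I$ shares a vertex with some edge of $\mathrm{supp}\,J$ (so $I\sim I$). $\mathrm{size}\,I=\|I\|_1+\mathrm{diam}\,\mathrm{supp}\,I$, where diam is the diameter in the graph distance of the mesoscopic graph (maximal graph distance between endpoints of edges in the set). Constants: $c>0$ is the constant in the lower bound $H_{\mathrm{disl}}(I)\ge c\|I\|_1$, $c_3=1+\eta^{-1}$, $c_4=c/(2c_3)$. ''$\beta$ large enough'' means $\beta>\beta_0$ with $\beta_0$ depending only on $\Gamma$, the mesoscopic graph, $c$ (and $c_5$). *)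

(* Defs.v *)
From Stdlib Require Import Reals Lra ZArith List Classical ClassicalEpsilon.
Open Scope R_scope.

Definition R3 := (R * R * R)%type.
Definition r3add (x y : R3) : R3 :=
  let '(x1, x2, x3) := x in let '(y1, y2, y3) := y in (x1 + y1, x2 + y2, x3 + y3).
Definition r3scal (k : R) (x : R3) : R3 :=
  let '(x1, x2, x3) := x in (k * x1, k * x2, k * x3).
Definition r3norm (x : R3) : R :=
  let '(x1, x2, x3) := x in sqrt (x1 * x1 + x2 * x2 + x3 * x3).
Definition det3 (a b c : R3) : R :=
  let '(a1, a2, a3) := a in let '(b1, b2, b3) := b in let '(c1, c2, c3) := c in
  a1 * (b2 * c3 - b3 * c2) - a2 * (b1 * c3 - b3 * c1) + a3 * (b1 * c2 - b2 * c1).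

(** * Lattices of rank 3 in R^3, given by a basis.  An element of the lattice
    is represented by its integer coordinates in the basis (a bijection,
    since the basis is linearly independent). *)
Definition Z3 := (Z * Z * Z)%type.
Definition z3zero : Z3 := (0%Z, 0%Z, 0%Z).
Definition z3add (x y : Z3) : Z3 :=
  let '(x1, x2, x3) := x in let '(y1, y2, y3) := y in
  ((x1 + y1)%Z, (x2 + y2)%Z, (x3 + y3)%Z).
Definition z3scal (k : Z) (x : Z3) : Z3 :=
  let '(x1, x2, x3) := x in ((k * x1)%Z, (k * x2)%Z, (k * x3)%Z).
Definition z3_eqb (x y : Z3) : bool :=
  let '(x1, x2, x3) := x in let '(y1, y2, y3) := y in
  (Z.eqb x1 y1 && Z.eqb x2 y2 && Z.eqb x3 y3)%bool.

Record lattice3 := { lb1 : R3; lb2 : R3; lb3 : R3 }.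
Definition rank3 (G : lattice3) : Prop := det3 (lb1 G) (lb2 G) (lb3 G) <> 0.
Definition gvec (G : lattice3) (k : Z3) : R3 :=
  let '(k1, k2, k3) := k in
  r3add (r3add (r3scal (IZR k1) (lb1 G)) (r3scal (IZR k2) (lb2 G))) (r3scal (IZR k3) (lb3 G)).
Definition gnorm (G : lattice3) (k : Z3) : R := r3norm (gvec G k).
Definition is_min_norm (G : lattice3) (eta : R) : Prop :=
  (exists k, k <> z3zero /\ gnorm G k = eta) /\
  (forall k, k <> z3zero -> eta <= gnorm G k).

Record lgraph := { gV : R3 -> Prop; gE : R3 -> R3 -> Prop }.
Definition edge := (R3 * R3)%type.
Definition tail (e : edge) : R3 := fst e.
Definition head (e : edge) : R3 := snd e.
Definition is_edge (Gr : lgraph) (e : edge) : Prop := gE Gr (tail e) (head e).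

Definition periodic_lattice_graph (Gr : lgraph) : Prop :=
  (* edges join distinct vertices, each carries one counting direction *)
  (forall x y, gE Gr x y -> gV Gr x /\ gV Gr y /\ x <> y /\ ~ gE Gr y x) /\
  exists P : lattice3, rank3 P /\
    (forall k x, gV Gr x <-> gV Gr (r3add x (gvec P k))) /\
    (forall k x y, gE Gr x y <-> gE Gr (r3add x (gvec P k)) (r3add y (gvec P k))) /\
    (exists F : list R3, forall x, gV Gr x ->
        exists f k, In f F /\ x = r3add f (gvec P k)).

Definition incident (v : R3) (e : edge) : Prop := tail e = v \/ head e = v.

Definition bounded_degree (Gr : lgraph) : Prop :=
  exists D : nat, forall (v : R3) (L : list edge), NoDup L ->
    (forall e, In e L -> is_edge Gr e /\ incident v e) -> (length L <= D)%nat.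

Definition finite_edge_set (Gr : lgraph) (E : list edge) : Prop :=
  NoDup E /\ forall e, In e E -> is_edge Gr e.

Definition indic (P : Prop) : R :=
  if excluded_middle_informative P then 1 else 0.

Definition sinc (v : R3) (e : edge) : Z :=
  if excluded_middle_informative (v = head e) then 1%Z
  else if excluded_middle_informative (v = tail e) then (-1)%Z else 0%Z.

(** * Currents: I in Gamma^E is a list of lattice elements aligned with E. *)
Definition kirchhoff (E : list edge) (I : list Z3) : Prop :=
  forall v, (exists e, In e E /\ incident v e) ->
    fold_right z3add z3zero
      (map (fun p => z3scal (sinc v (fst p)) (snd p)) (combine E I)) = z3zero.

Definition is_current (E : list edge) (I : list Z3) : Prop :=
  length I = length E /\ kirchhoff E I.

Definition in_supp (E : list edge) (I : list Z3) (e : edge) : Prop :=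
  exists g, In (e, g) (combine E I) /\ g <> z3zero.

Definition supp_card (I : list Z3) : nat :=
  length (filter (fun g => negb (z3_eqb g z3zero)) I).

Definition l1norm (G : lattice3) (I : list Z3) : R :=
  fold_right Rplus 0 (map (gnorm G) I).

(** walks along (undirected) edges of a set S of edges: u = v0, v1, ..., vk = w
    where l = [v1; ...; vk]; its length is length l *)
Fixpoint walk (S : edge -> Prop) (u : R3) (l : list R3) (w : R3) : Prop :=
  match l with
  | nil => u = w
  | x :: l' => (S (u, x) \/ S (x, u)) /\ walk S x l' w
  end.

Definition supp_vertex (E : list edge) (I : list Z3) (v : R3) : Prop :=
  exists e, in_supp E I e /\ incident v e.

Definition supp_connected (E : list edge) (I : list Z3) : Prop :=
  forall u w, supp_vertex E I u -> supp_vertex E I w ->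
    exists l, walk (in_supp E I) u l w.

Definition is_J (E : list edge) (I : list Z3) : Prop :=
  is_current E I /\ (exists e, in_supp E I e) /\ supp_connected E I.

Definition is_gdist (Gr : lgraph) (u w : R3) (n : nat) : Prop :=
  (exists l, length l = n /\ walk (is_edge Gr) u l w) /\
  (forall l, walk (is_edge Gr) u l w -> (n <= length l)%nat).

Definition is_diam (Gr : lgraph) (E : list edge) (I : list Z3) (d : nat) : Prop :=
  (exists u w, supp_vertex E I u /\ supp_vertex E I w /\ is_gdist Gr u w d) /\
  (forall u w n, supp_vertex E I u -> supp_vertex E I w -> is_gdist Gr u w n ->
     (n <= d)%nat).

Definition diam (Gr : lgraph) (E : list edge) (I : list Z3) : nat :=
  epsilon (inhabits 0%nat) (is_diam Gr E I).

Definition size (G : lattice3) (Gr : lgraph) (E : list edge) (I : list Z3) : R :=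
  l1norm G I + INR (diam Gr E I).

Definition incompat (E : list edge) (I J : list Z3) : Prop :=
  exists e f v, in_supp E I e /\ in_supp E J f /\ incident v e /\ incident v f.

Definition sumR (l : list R) : R := fold_right Rplus 0 l.

Definition c3 (eta : R) : R := 1 + / eta.
Definition c4 (c eta : R) : R := c / (2 * c3 eta).
Definition c6 (c eta c5 : R) : R := c4 c eta - c5.

Definition Kw (G : lattice3) (Gr : lgraph) (c eta beta : R) (E : list edge) (J : list Z3) : R :=
  exp (- (beta * c4 c eta * size G Gr E J)).
Definition aw (c5 eta beta : R) (J : list Z3) : R :=
  beta * c5 * eta * INR (supp_card J).

(* Main.v *)
Require Import Defs.
From Stdlib Require Import Reals List Lra Lia ZArith Classical ClassicalEpsilon PropExtensionality.
Open Scope R_scope.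

Definition pb (P : Prop) : bool := if excluded_middle_informative P then true else false.
Lemma pb_spec P : pb P = true <-> P.
Proof. unfold pb; destruct (excluded_middle_informative P); split; intros; auto; try discriminate; contradiction. Qed.

Lemma indic_1 (P:Prop) : P -> indic P = 1.
Proof. intros; unfold indic; destruct (excluded_middle_informative P); tauto. Qed.
Lemma indic_0 (P:Prop) : ~P -> indic P = 0.
Proof. intros; unfold indic; destruct (excluded_middle_informative P); tauto. Qed.
Lemma indic_bounds P : 0 <= indic P <= 1.
Proof. unfold indic; destruct (excluded_middle_informative P); lra. Qed.

Fixpoint prodR (l : list R) : R := match l with nil => 1 | x::l' => x * prodR l' end.

Lemma sumR_app l1 l2 : sumR (l1 ++ l2) = sumR l1 + sumR l2.
Proof. induction l1; simpl; [lra|]. rewrite IHl1; lra. Qed.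
Lemma sumR_map_plus {A} (f g : A -> R) l : sumR (map (fun x => f x + g x) l) = sumR (map f l) + sumR (map g l).
Proof. induction l; simpl; [lra|]. rewrite IHl; lra. Qed.
Lemma sumR_map_scal {A} c (f : A -> R) l : sumR (map (fun x => c * f x) l) = c * sumR (map f l).
Proof. induction l; simpl; [lra|]. rewrite IHl; lra. Qed.
Lemma sumR_map_le {A} (f g : A -> R) l : (forall x, In x l -> f x <= g x) -> sumR (map f l) <= sumR (map g l).
Proof. induction l; simpl; intros H; [lra|]. specialize (IHl (fun x Hx => H x (or_intror Hx))). specialize (H a (or_introl eq_refl)). lra. Qed.
Lemma sumR_map_nonneg {A} (f : A -> R) l : (forall x, In x l -> 0 <= f x) -> 0 <= sumR (map f l).
Proof. induction l; simpl; intros H; [lra|]. specialize (IHl (fun x Hx => H x (or_intror Hx))). specialize (H a (or_introl eq_refl)). lra. Qed.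
Lemma sumR_map_ext {A} (f g : A -> R) l : (forall x, In x l -> f x = g x) -> sumR (map f l) = sumR (map g l).
Proof. intros H; rewrite (map_ext_in f g l H); auto. Qed.
Lemma sumR_map_zero {A} (l : list A) : sumR (map (fun _ => 0) l) = 0.
Proof. induction l; simpl; lra. Qed.
Lemma sumR_filter {A} (P : A -> Prop) (f : A -> R) l :
  sumR (map (fun x => indic (P x) * f x) l) = sumR (map f (filter (fun x => pb (P x)) l)).
Proof. induction l; simpl; [lra|]. unfold pb at 1. destruct (excluded_middle_informative (P a)).
 rewrite indic_1 by auto. simpl. rewrite IHl. lra. rewrite indic_0 by auto. rewrite IHl; lra. Qed.

Definition eqd {A} (x y : A) : {x = y} + {x <> y} := excluded_middle_informative (x = y).

Lemma sumR_remove {A} (f : A -> R) a m : In a m -> (forall x, 0 <= f x) ->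
  f a + sumR (map f (remove eqd a m)) <= sumR (map f m).
Proof. intros Hin Hf. induction m as [|b m IH]; simpl in *; [contradiction|].
 destruct (eqd a b) as [<-|Hne].
 - destruct (classic (In a m)). specialize (IH H). specialize (Hf a). lra.
   rewrite notin_remove by auto. lra.
 - simpl. destruct Hin as [->|Hin]; [congruence|]. specialize (IH Hin). lra. Qed.

Lemma sumR_incl {A} (f : A -> R) l m : NoDup l -> incl l m -> (forall x, 0 <= f x) -> sumR (map f l) <= sumR (map f m).
Proof. intros Hnd; revert m; induction Hnd as [|a l Ha Hnd IH]; intros m Hinc Hf; simpl.
 - apply sumR_map_nonneg; auto.
 - assert (Hin : In a m) by (apply Hinc; simpl; auto).
   pose proof (sumR_remove f a m Hin Hf).
   assert (incl l (remove eqd a m)). { intros y Hy. apply in_in_remove. intro; subst; contradiction. apply Hinc; simpl; auto. }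
   specialize (IH _ H0 Hf). lra. Qed.

Lemma sumR_swap {A B} (F : A -> B -> R) la lb : sumR (map (fun a => sumR (map (F a) lb)) la) = sumR (map (fun b => sumR (map (fun a => F a b) la)) lb).
Proof. induction la; simpl. rewrite sumR_map_zero; auto. rewrite IHla. rewrite <- sumR_map_plus. auto. Qed.

Lemma sumR_list_prod {A B} (F : A -> R) (H : B -> R) l1 l2 :
  sumR (map (fun p => F (fst p) * H (snd p)) (list_prod l1 l2)) = sumR (map F l1) * sumR (map H l2).
Proof. induction l1; simpl; [lra|]. rewrite map_app, sumR_app, IHl1, map_map. simpl.
 rewrite sumR_map_scal. lra. Qed.

Lemma prodR_nonneg l : (forall x, In x l -> 0 <= x) -> 0 <= prodR l.
Proof. induction l; simpl; intros H; [lra|]. apply Rmult_le_pos; auto. Qed.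

Definition fw {V} (q : V -> R) (o : option V) : R := match o with None => 1 | Some v => q v end.
Definition cross {X Y V} (st : Y -> X -> option V) (E : list X) (L : list Y) : Prop :=
  forall J J', In J L -> In J' L -> J <> J' ->
    exists x a b, In x E /\ st J x = Some a /\ st J' x = Some b /\ a <> b.
Definition wt {X Y V} (q : V -> R) (st : Y -> X -> option V) (E : list X) (J : Y) : R :=
  prodR (map (fun x => fw q (st J x)) E).

Lemma wt_nonneg {X Y V} (q : V -> R) (st : Y -> X -> option V) E J :
  (forall v, 0 <= q v) -> 0 <= wt q st E J.
Proof. intros Hq. unfold wt. apply prodR_nonneg. intros x Hx. apply in_map_iff in Hx.
 destruct Hx as [y [<- _]]. destruct (st J y); simpl; auto; lra. Qed.

Lemma vals_exist {Y V} (s : Y -> option V) (L : list Y) :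
  exists ss, NoDup ss /\ forall J v, In J L -> s J = Some v -> In v ss.
Proof. induction L as [|J L IH]. exists nil; split; [constructor| intros; contradiction].
 destruct IH as [ss [Hnd Hin]]. destruct (s J) as [v|] eqn:Hs.
 - destruct (classic (In v ss)).
   + exists ss. split; auto. intros J' v' [<-|HJ'] Hs'. rewrite Hs in Hs'. inversion Hs'; subst; auto. eauto.
   + exists (v::ss). split. constructor; auto. intros J' v' [<-|HJ'] Hs'. left. rewrite Hs in Hs'; congruence. right; eauto.
 - exists ss. split; auto. intros J' v' [<-|HJ'] Hs'. congruence. eauto.
Qed.

Lemma cross_sum {X Y V} (q : V -> R) (st : Y -> X -> option V) :
  (forall v, 0 <= q v) -> (forall G, NoDup G -> sumR (map q G) <= 1) ->
  forall E L, NoDup L -> cross st E L -> sumR (map (wt q st E) L) <= 1.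
Proof.
  intros Hq HG E. induction E as [|x0 E IH]; intros L HL Hc.
  - destruct L as [|J [|J' L]]; simpl.
    + lra.
    + unfold wt; simpl; lra.
    + exfalso. inversion HL; subst. assert (J <> J') by (intro; subst; apply H1; simpl; auto).
      destruct (Hc J J') as [x [a [b [Hx _]]]]; simpl; auto.
  - set (w' := wt q st E).
    assert (Hw' : forall J, 0 <= w' J) by (intros; apply wt_nonneg; auto).
    assert (Hsub : forall P : Y -> Prop, (forall J J', P J -> P J' -> forall a b, st J x0 = Some a -> st J' x0 = Some b -> a = b) ->
       sumR (map (fun J => indic (P J) * w' J) L) <= 1).
    { intros P HP. rewrite sumR_filter. apply IH. apply NoDup_filter; auto.
      intros J J' HJ HJ' Hne. apply filter_In in HJ, HJ'. destruct HJ as [HJ HPJ], HJ' as [HJ' HPJ']. apply (proj1 (pb_spec (P J))) in HPJ; apply (proj1 (pb_spec (P J'))) in HPJ'.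
      destruct (Hc J J' HJ HJ' Hne) as [x [a [b [[<-|Hx] [Ha [Hb Hab]]]]]].
      + exfalso; apply Hab; exact (HP J J' HPJ HPJ' a b Ha Hb).
      + exists x, a, b; auto. }
    set (T := sumR (map (fun J => indic (st J x0 = None) * w' J) L)).
    assert (HT : T <= 1). { apply Hsub. intros J J' H1 H2 a b Ha Hb. congruence. }
    assert (HT0 : 0 <= T). { apply sumR_map_nonneg. intros; pose proof (indic_bounds (st x x0 = None)); pose proof (Hw' x); nra. }
    assert (Phi : forall ss, NoDup ss ->
      sumR (map (fun J => indic (exists v, In v ss /\ st J x0 = Some v) * (fw q (st J x0) * w' J)) L) <= sumR (map q ss) * (1 - T)).
    { induction 1 as [|s ss Hs Hnd IHs].
      - replace (sumR (map q nil) * (1 - T)) with (sumR (map (fun _:Y => 0) L)) by (rewrite sumR_map_zero; simpl; ring).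
        apply Req_le. apply sumR_map_ext. intros J _.
        rewrite indic_0. lra. intros [v [[] _]].
      - rewrite (sumR_map_ext _ (fun J => q s * (indic (st J x0 = Some s) * w' J) +
             indic (exists v, In v ss /\ st J x0 = Some v) * (fw q (st J x0) * w' J))).
        + rewrite sumR_map_plus, sumR_map_scal.
          assert (H1 : sumR (map (fun J => indic (st J x0 = Some s) * w' J) L) + T <= 1).
          { unfold T. rewrite <- sumR_map_plus. 
            rewrite (sumR_map_ext _ (fun J => indic (st J x0 = Some s \/ st J x0 = None) * w' J)).
            apply Hsub. intros J J' [A|A] [B|B] a b Ha Hb; congruence.
            intros J _. destruct (st J x0) as [v|] eqn:E1.
            - destruct (classic (v = s)). subst. rewrite (indic_1 (Some s = Some s)), indic_0, indic_1 by (auto; discriminate). lra.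
              rewrite !indic_0. lra. intros [A|A]; congruence. congruence. congruence.
            - rewrite indic_0, indic_1, indic_1; auto; try lra. discriminate. }
          simpl. pose proof (Hq s). nra.
        + intros J _. destruct (st J x0) as [v|] eqn:E1.
          * destruct (classic (v = s)). 
            -- subst. rewrite indic_1, indic_1, indic_0; simpl; try lra. intros [v [Hv Hv']]. inversion Hv'; subst; contradiction.
               auto. exists s; simpl; auto.
            -- rewrite (indic_0 (Some v = Some s)) by congruence.
               replace (indic (exists v0, In v0 (s :: ss) /\ Some v = Some v0)) with (indic (exists v0, In v0 ss /\ Some v = Some v0)). lra.
               f_equal. apply propositional_extensionality. split. intros [v0 [A B]]. exists v0; simpl; auto.
               intros [v0 [[A|A] B]]. subst; congruence. eauto.
          * rewrite !indic_0; try lra. intros [v [_ A]]; congruence. discriminate. intros [v [_ A]]; congruence. }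
    destruct (vals_exist (fun J => st J x0) L) as [ss [Hnd Hss]].
    specialize (Phi ss Hnd). specialize (HG ss Hnd).
    unfold wt; simpl. fold w'.
    rewrite (sumR_map_ext _ (fun J => indic (st J x0 = None) * w' J + indic (exists v, In v ss /\ st J x0 = Some v) * (fw q (st J x0) * w' J))).
    + rewrite sumR_map_plus. fold T. nra.
    + intros J HJ. unfold w', wt. fold (wt q st E J). fold w'. destruct (st J x0) as [v|] eqn:E1.
      * rewrite indic_0, indic_1. simpl. lra. exists v; split; eauto. discriminate.
      * rewrite indic_1, indic_0; simpl. lra. intros [v [_ A]]; discriminate. auto.
Qed.
Lemma exp_le x y : x <= y -> exp x <= exp y.
Proof. intros [H|H]. apply Rlt_le, exp_increasing; auto. subst; lra. Qed.


Lemma aux3 x1 x2 x3 m1 m2 m3 N : Rabs x1 <= N -> Rabs x2 <= N -> Rabs x3 <= N ->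
  Rabs (x1*m1 + x2*m2 + x3*m3) <= N*(Rabs m1 + Rabs m2 + Rabs m3).
Proof. intros H1 H2 H3.
 eapply Rle_trans. apply Rabs_triang. eapply Rle_trans. apply Rplus_le_compat_r. apply Rabs_triang.
 rewrite !Rabs_mult.
 pose proof (Rabs_pos m1); pose proof (Rabs_pos m2); pose proof (Rabs_pos m3).
 pose proof (Rmult_le_compat_r _ _ _ H H1). pose proof (Rmult_le_compat_r _ _ _ H0 H2). pose proof (Rmult_le_compat_r _ _ _ H4 H3). lra. Qed.

Lemma abs_le_norm x1 x2 x3 : Rabs x1 <= sqrt (x1*x1+x2*x2+x3*x3).
Proof. rewrite <- sqrt_Rsqr_abs. apply sqrt_le_1_alt. unfold Rsqr. nra. Qed.

Definition zn (k : Z3) : R := let '(k1,k2,k3) := k in Rabs (IZR k1) + Rabs (IZR k2) + Rabs (IZR k3).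

Lemma gnorm_nonneg G k : 0 <= gnorm G k.
Proof. unfold gnorm, r3norm. destruct (gvec G k) as [[? ?] ?]. apply sqrt_pos. Qed.

Lemma gnorm_zero G : gnorm G z3zero = 0.
Proof. destruct G as [[[a1 a2] a3] [[b1 b2] b3] [[c1 c2] c3]]. unfold gnorm, gvec, z3zero, r3norm, r3add, r3scal; simpl.
 replace (0 * a1 + 0 * b1 + 0 * c1) with 0 by ring. replace (0 * a2 + 0 * b2 + 0 * c2) with 0 by ring.
 replace (0 * a3 + 0 * b3 + 0 * c3) with 0 by ring. replace (0*0+0*0+0*0) with 0 by ring. apply sqrt_0. Qed.

Lemma gnorm_lb G : rank3 G -> exists al, 0 < al /\ forall k, al * zn k <= gnorm G k.
Proof. destruct G as [[[a1 a2] a3] [[b1 b2] b3] [[c1 c2] c3]]. unfold rank3, det3; simpl. intros Hd.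
 set (d := a1 * (b2 * c3 - b3 * c2) - a2 * (b1 * c3 - b3 * c1) + a3 * (b1 * c2 - b2 * c1)) in *.
 set (C1 := Rabs (b2*c3 - b3*c2) + Rabs (-(b1*c3 - b3*c1)) + Rabs (b1*c2 - b2*c1)).
 set (C2 := Rabs (-a2*c3 + a3*c2) + Rabs (a1*c3 - a3*c1) + Rabs (-a1*c2 + a2*c1)).
 set (C3 := Rabs (a2*b3 - a3*b2) + Rabs (-a1*b3 + a3*b1) + Rabs (a1*b2 - a2*b1)).
 assert (HC : 0 <= C1 + C2 + C3) by (unfold C1, C2, C3; pose proof (Rabs_pos (b2*c3 - b3*c2));
   pose proof (Rabs_pos (-(b1*c3 - b3*c1))); pose proof (Rabs_pos (b1*c2 - b2*c1));
   pose proof (Rabs_pos (-a2*c3 + a3*c2)); pose proof (Rabs_pos (a1*c3 - a3*c1)); pose proof (Rabs_pos (-a1*c2 + a2*c1));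
   pose proof (Rabs_pos (a2*b3 - a3*b2)); pose proof (Rabs_pos (-a1*b3 + a3*b1)); pose proof (Rabs_pos (a1*b2 - a2*b1)); lra).
 assert (Hdp : 0 < Rabs d) by (apply Rabs_pos_lt; auto).
 exists (Rabs d / (C1+C2+C3+1)). split. apply Rdiv_lt_0_compat; lra.
 intros [[k1 k2] k3]. unfold gnorm, gvec, r3norm, r3add, r3scal, zn; simpl.
 set (x1 := IZR k1 * a1 + IZR k2 * b1 + IZR k3 * c1).
 set (x2 := IZR k1 * a2 + IZR k2 * b2 + IZR k3 * c2).
 set (x3 := IZR k1 * a3 + IZR k2 * b3 + IZR k3 * c3).
 set (N := sqrt (x1*x1+x2*x2+x3*x3)).
 assert (H1 : Rabs x1 <= N) by apply abs_le_norm.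
 assert (H2 : Rabs x2 <= N) by (unfold N; replace (x1*x1+x2*x2+x3*x3) with (x2*x2+x1*x1+x3*x3) by ring; apply abs_le_norm).
 assert (H3 : Rabs x3 <= N) by (unfold N; replace (x1*x1+x2*x2+x3*x3) with (x3*x3+x1*x1+x2*x2) by ring; apply abs_le_norm).
 assert (E1 : IZR k1 * d = x1*(b2*c3 - b3*c2) + x2*(-(b1*c3 - b3*c1)) + x3*(b1*c2 - b2*c1)) by (unfold x1,x2,x3,d; ring).
 assert (E2 : IZR k2 * d = x1*(-a2*c3 + a3*c2) + x2*(a1*c3 - a3*c1) + x3*(-a1*c2 + a2*c1)) by (unfold x1,x2,x3,d; ring).
 assert (E3 : IZR k3 * d = x1*(a2*b3 - a3*b2) + x2*(-a1*b3 + a3*b1) + x3*(a1*b2 - a2*b1)) by (unfold x1,x2,x3,d; ring).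
 pose proof (aux3 _ _ _ (b2*c3 - b3*c2) (-(b1*c3 - b3*c1)) (b1*c2 - b2*c1) _ H1 H2 H3) as F1. rewrite <- E1, Rabs_mult in F1.
 pose proof (aux3 _ _ _ (-a2*c3 + a3*c2) (a1*c3 - a3*c1) (-a1*c2 + a2*c1) _ H1 H2 H3) as F2. rewrite <- E2, Rabs_mult in F2.
 pose proof (aux3 _ _ _ (a2*b3 - a3*b2) (-a1*b3 + a3*b1) (a1*b2 - a2*b1) _ H1 H2 H3) as F3. rewrite <- E3, Rabs_mult in F3.
 fold C1 in F1. fold C2 in F2. fold C3 in F3.
 assert (HN : 0 <= N) by apply sqrt_pos.
 unfold Rdiv. rewrite Rmult_comm, <- Rmult_assoc.
 apply (Rmult_le_reg_r (C1+C2+C3+1)). lra. rewrite Rmult_assoc, Rinv_l by lra. nra.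
Qed.

Lemma geo x k N : 0 <= x < 1 -> sumR (map (fun n => x ^ n) (seq k N)) <= x ^ k / (1 - x).
Proof. intros Hx. revert k. induction N; intros k; simpl.
 - apply Rmult_le_pos. apply pow_le; lra. apply Rlt_le, Rinv_0_lt_compat; lra.
 - specialize (IHN (S k)). simpl in IHN.
   assert (x ^ k / (1 - x) = x^k + x * x ^ k / (1 - x)) by (field; lra). lra. Qed.

Definition fz (s : R) (z : Z) : R := exp (- s * Rabs (IZR z)).

Lemma exp_nat s n : exp (- s * INR n) = exp (- s) ^ n.
Proof. induction n. simpl. rewrite Rmult_0_r; apply exp_0.
 rewrite S_INR. simpl. rewrite <- IHn, <- exp_plus. f_equal; ring. Qed.

Definition zlist (N : nat) : list Z := map Z.of_nat (seq 0 N) ++ map (fun n => Z.opp (Z.of_nat n)) (seq 0 N).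

Lemma zlist_sum s N : 0 < s -> sumR (map (fz s) (zlist N)) <= 2 / (1 - exp (- s)).
Proof. intros Hs. unfold zlist. rewrite map_app, sumR_app, !map_map.
 assert (Hx : 0 <= exp (-s) < 1). { split. apply Rlt_le, exp_pos. rewrite <- exp_0. apply exp_increasing. lra. }
 rewrite (sumR_map_ext _ (fun n => exp (-s) ^ n) (seq 0 N)).
 rewrite (sumR_map_ext (fun x => fz s (- Z.of_nat x)) (fun n => exp (-s) ^ n) (seq 0 N)).
 pose proof (geo (exp (-s)) 0 N Hx). simpl in H. lra.
 all: intros n _; unfold fz; rewrite ?opp_IZR, ?Rabs_Ropp, <- INR_IZR_INZ, Rabs_pos_eq by apply pos_INR; apply exp_nat.
Qed.

Lemma zlist_in N z : (Z.abs z < Z.of_nat N)%Z -> In z (zlist N).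
Proof. intros H. unfold zlist. apply in_or_app. destruct (Z_le_gt_dec 0 z).
 - left. apply in_map_iff. exists (Z.to_nat z). split. lia. apply in_seq. lia.
 - right. apply in_map_iff. exists (Z.to_nat (- z)). split. lia. apply in_seq. lia. Qed.

Lemma bound_exists (G : list Z3) : exists N, forall k1 k2 k3, In (k1,k2,k3) G ->
  (Z.abs k1 < Z.of_nat N)%Z /\ (Z.abs k2 < Z.of_nat N)%Z /\ (Z.abs k3 < Z.of_nat N)%Z.
Proof. induction G as [|[[a b] c] G [N HN]]. exists 0%nat; intros; contradiction.
 exists (N + Z.to_nat (Z.abs a) + Z.to_nat (Z.abs b) + Z.to_nat (Z.abs c) + 1)%nat.
 intros k1 k2 k3 [Heq|Hin]. inversion Heq; subst. lia. specialize (HN _ _ _ Hin). lia. Qed.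

Definition qs (G : lattice3) (b : R) (g : Z3) : R :=
  if excluded_middle_informative (g = z3zero) then 0 else exp (- b * gnorm G g).

Lemma zn_ge1 k : k <> z3zero -> 1 <= zn k.
Proof. destruct k as [[k1 k2] k3]; unfold zn, z3zero; intros H.
 pose proof (Rabs_pos (IZR k1)); pose proof (Rabs_pos (IZR k2)); pose proof (Rabs_pos (IZR k3)).
 rewrite !Rabs_Zabs in *.
 destruct (Z.eq_dec k1 0); [destruct (Z.eq_dec k2 0); [destruct (Z.eq_dec k3 0)|]|].
 - subst; congruence.
 - assert (1 <= IZR (Z.abs k3)) by (apply IZR_le; lia). lra.
 - assert (1 <= IZR (Z.abs k2)) by (apply IZR_le; lia). lra.
 - assert (1 <= IZR (Z.abs k1)) by (apply IZR_le; lia). lra. Qed.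

Lemma lattice_sum G : rank3 G -> exists b1, 0 < b1 /\
  forall L, NoDup L -> sumR (map (qs G b1) L) <= 1/2.
Proof. intros HG. destruct (gnorm_lb G HG) as [al [Hal Hlb]].
 set (s := ln 128). assert (Hs : 0 < s) by (unfold s; rewrite <- ln_1; apply ln_increasing; lra).
 assert (Hx : exp (- s) = / 128) by (unfold s; rewrite exp_Ropp, exp_ln; lra).
 exists (2 * s / al). split. apply Rdiv_lt_0_compat; lra.
 intros L HL. destruct (bound_exists L) as [N HN].
 set (F3 := fun k : Z3 => fz s (fst (fst k)) * fz s (snd (fst k)) * fz s (snd k)).
 apply Rle_trans with (sumR (map (fun k => exp (-s) * F3 k) L)).
 - apply sumR_map_le. intros k _. unfold qs. destruct (excluded_middle_informative (k = z3zero)).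
   + apply Rmult_le_pos. apply Rlt_le, exp_pos. unfold F3. repeat apply Rmult_le_pos; apply Rlt_le, exp_pos.
   + assert (E : F3 k = exp (- s * zn k)). { unfold F3, fz, zn. destruct k as [[k1 k2] k3]; simpl. rewrite <- !exp_plus. f_equal; ring. }
     rewrite E, <- exp_plus. apply exp_le. pose proof (Hlb k). pose proof (zn_ge1 k n).
     assert (2 * s / al * gnorm G k >= 2 * s * zn k). { unfold Rdiv. rewrite Rmult_assoc.
       apply Rle_ge. apply Rmult_le_compat_l. lra. apply (Rmult_le_reg_l al). lra. rewrite <- Rmult_assoc, Rinv_r by lra. lra. }
     nra.
 - rewrite sumR_map_scal, Hx.
   assert (Hinc : incl L (list_prod (list_prod (zlist N) (zlist N)) (zlist N))).
   { intros [[k1 k2] k3] Hk. destruct (HN _ _ _ Hk) as [A [B C]]. apply in_prod; [apply in_prod|]; apply zlist_in; auto. }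
   pose proof (sumR_incl F3 _ _ HL Hinc) as Hle.
   assert (HF : forall x, 0 <= F3 x) by (intros; unfold F3, fz; repeat apply Rmult_le_pos; apply Rlt_le, exp_pos).
   specialize (Hle HF).
   unfold F3 at 2 in Hle.
   rewrite (sumR_list_prod (fun p => fz s (fst p) * fz s (snd p)) (fz s)), sumR_list_prod in Hle.
   pose proof (zlist_sum s N Hs) as Z. rewrite Hx in Z.
   assert (0 <= sumR (map (fz s) (zlist N))) by (apply sumR_map_nonneg; intros; unfold fz; apply Rlt_le, exp_pos).
   assert (Z' : sumR (map (fz s) (zlist N)) <= 3) by (eapply Rle_trans; [apply Z|]; apply Rmult_le_reg_r with (1 - /128); [lra|]; unfold Rdiv; rewrite Rmult_assoc, Rinv_l; lra).
   assert (sumR (map (fz s) (zlist N)) * sumR (map (fz s) (zlist N)) * sumR (map (fz s) (zlist N)) <= 27).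
   { assert (sumR (map (fz s) (zlist N)) * sumR (map (fz s) (zlist N)) <= 9) by nra. nra. }
   nra.
Qed.

Fixpoint lk (E : list edge) (J : list Z3) (e : edge) : Z3 :=
  match E, J with
  | e'::E', g::J' => if excluded_middle_informative (e = e') then g else lk E' J' e
  | _, _ => z3zero end.

Lemma in_combine_lk E J e g : NoDup E -> length J = length E ->
  (In (e,g) (combine E J) <-> In e E /\ lk E J e = g).
Proof. revert J. induction E as [|e' E IH]; intros [|g' J] Hnd Hl; simpl in *; try discriminate.
 - tauto.
 - inversion Hnd; subst. injection Hl as Hl.
   destruct (excluded_middle_informative (e = e')) as [->|Hne].
   + split. intros [H|H]. inversion H; auto. apply in_combine_l in H; contradiction.
     intros [_ ->]. auto.
   + rewrite IH by auto. split. intros [H|H]. inversion H; congruence. tauto.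
     intros [[H|H] H']. congruence. auto. Qed.

Lemma in_supp_lk E J e : NoDup E -> length J = length E ->
  (in_supp E J e <-> In e E /\ lk E J e <> z3zero).
Proof. intros Hnd Hl. unfold in_supp. split.
 - intros [g [Hin Hg]]. apply in_combine_lk in Hin; auto. destruct Hin; subst; auto.
 - intros [Hin Hg]. exists (lk E J e). split; auto. apply in_combine_lk; auto. Qed.

Lemma lk_ext E J J' : NoDup E -> length J = length E -> length J' = length E ->
  (forall e, In e E -> lk E J e = lk E J' e) -> J = J'.
Proof. revert J J'. induction E as [|e E IH]; intros [|g J] [|g' J'] Hnd Hl Hl' H; simpl in *; try discriminate; auto.
 inversion Hnd; subst. injection Hl as Hl; injection Hl' as Hl'.
 pose proof (H e (or_introl eq_refl)). destruct (excluded_middle_informative (e = e)); [|congruence]. subst.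
 f_equal. apply IH; auto. intros x Hx. specialize (H x (or_intror Hx)).
 destruct (excluded_middle_informative (x = e)); [subst; contradiction|auto]. Qed.

Lemma lk_tail E J e' g x : ~ In e' E -> In x E -> lk (e'::E) (g::J) x = lk E J x.
Proof. intros H Hx. simpl. destruct (excluded_middle_informative (x = e')); [subst; contradiction|auto]. Qed.

Lemma l1_lk G E J : NoDup E -> length J = length E -> l1norm G J = sumR (map (fun e => gnorm G (lk E J e)) E).
Proof. revert J. induction E as [|e E IH]; intros [|g J] Hnd Hl; simpl in *; try discriminate; auto.
 inversion Hnd; subst. injection Hl as Hl. unfold l1norm in *; simpl.
 destruct (excluded_middle_informative (e = e)); [|congruence]. f_equal.
 rewrite IH by auto. apply sumR_map_ext. intros x Hx. destruct (excluded_middle_informative (x = e)); [subst; contradiction|auto]. Qed.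

Definition cnt {A} (P : A -> Prop) (l : list A) : nat := length (filter (fun x => pb (P x)) l).

Lemma cnt_cons {A} (P : A -> Prop) a l : cnt P (a::l) = ((if pb (P a) then 1 else 0) + cnt P l)%nat.
Proof. unfold cnt; simpl. destruct (pb (P a)); auto. Qed.

Lemma cnt_ext {A} (P Q : A -> Prop) l : (forall x, In x l -> (P x <-> Q x)) -> cnt P l = cnt Q l.
Proof. intros H. unfold cnt. f_equal. apply filter_ext_in. intros a Ha. unfold pb.
 destruct (excluded_middle_informative (P a)), (excluded_middle_informative (Q a)); firstorder. Qed.

Lemma supp_card_lk E J : NoDup E -> length J = length E -> supp_card J = cnt (in_supp E J) E.
Proof. intros Hnd Hl. rewrite (cnt_ext _ (fun e => lk E J e <> z3zero)).
 2:{ intros x Hx. rewrite in_supp_lk by auto. tauto. }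
 revert J Hl. induction E as [|e E IH]; intros [|g J] Hl; simpl in *; try discriminate; auto.
 inversion Hnd; subst. injection Hl as Hl. unfold supp_card in *. simpl. rewrite cnt_cons.
 destruct (excluded_middle_informative (e = e)); [|congruence].
 rewrite (cnt_ext _ (fun x => lk E J x <> z3zero) E).
 2:{ intros x Hx. destruct (excluded_middle_informative (x = e)); [subst; contradiction|tauto]. }
 rewrite <- IH by auto.
 unfold pb; destruct (excluded_middle_informative (g <> z3zero)); destruct (z3_eqb g z3zero) eqn:Eq; simpl; auto.
 - exfalso. destruct g as [[a b] c]; unfold z3_eqb, z3zero in *. apply n.
   apply andb_prop in Eq; destruct Eq as [Eq C]; apply andb_prop in Eq; destruct Eq as [A B].
   apply Z.eqb_eq in A, B, C. subst; auto.
 - exfalso. apply n. intros ->. simpl in Eq. discriminate. Qed.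

Lemma l1_ge G eta J : (forall g, g <> z3zero -> eta <= gnorm G g) -> eta * INR (supp_card J) <= l1norm G J.
Proof. intros H. induction J as [|g J IH]; unfold supp_card, l1norm in *. simpl. lra.
 simpl filter. simpl map. cbn [fold_right]. destruct (z3_eqb g z3zero) eqn:Eq; cbn [negb].
 - pose proof (gnorm_nonneg G g). lra.
 - cbn [length]. rewrite S_INR. assert (g <> z3zero). { intros ->. simpl in Eq; discriminate. } specialize (H g H0). lra.
Qed.

Lemma walk_escape (S S' : edge -> Prop) l : forall u w,
  (exists s, S s /\ incident u s) -> walk S' u l w ->
  (exists f, S' f /\ ~ S f /\ incident w f) ->
  exists h, S' h /\ ~ S h /\ exists s v, S s /\ incident v s /\ incident v h.
Proof. induction l as [|x l IH]; intros u w [s [Hs Hus]] Hw Hf; simpl in Hw.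
 - subst. destruct Hf as [f [A [B C]]]. exists f; repeat split; auto. exists s, w; auto.
 - destruct Hw as [Hx Hw].
   assert (Hcase : forall h, S' h -> incident u h -> incident x h -> exists h0, S' h0 /\ ~ S h0 /\ exists s v, S s /\ incident v s /\ incident v h0).
   { intros h Hh Hu Hxh. destruct (classic (S h)).
     - apply (IH x w); auto. exists h; auto.
     - exists h; repeat split; auto. exists s, u; auto. }
   destruct Hx as [Hx|Hx].
   + apply (Hcase (u,x)); auto; unfold incident; simpl; auto.
   + apply (Hcase (x,u)); auto; unfold incident; simpl; auto. Qed.

Definition inc_list (E : list edge) (v : R3) : list edge := filter (fun e => pb (incident v e)) E.
Definition nbr (E : list edge) (S : list edge) : list edge :=
  flat_map (fun s => inc_list E (Defs.tail s) ++ inc_list E (Defs.head s)) S.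

Lemma inc_list_len Gr D E v : finite_edge_set Gr E ->
  (forall (v : R3) (L : list edge), NoDup L -> (forall e, In e L -> is_edge Gr e /\ incident v e) -> (length L <= D)%nat) ->
  (length (inc_list E v) <= D)%nat.
Proof. intros [Hnd HE] HD. apply (HD v). apply NoDup_filter; auto.
 intros e He. apply filter_In in He. destruct He as [A B]. split; auto. apply (proj1 (pb_spec _)) in B; auto. Qed.

Lemma nbr_len Gr D E S : finite_edge_set Gr E ->
  (forall (v : R3) (L : list edge), NoDup L -> (forall e, In e L -> is_edge Gr e /\ incident v e) -> (length L <= D)%nat) ->
  (length (nbr E S) <= 2 * D * length S)%nat.
Proof. intros HE HD. induction S as [|s S IH]; simpl. lia.
 rewrite !length_app. fold (nbr E S).
 pose proof (inc_list_len Gr D E (Defs.tail s) HE HD). pose proof (inc_list_len Gr D E (Defs.head s) HE HD). lia. Qed.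

Lemma nbr_in E S e s v : In e E -> In s S -> incident v s -> incident v e -> In e (nbr E S).
Proof. intros He Hs Hvs Hve. unfold nbr. apply in_flat_map. exists s. split; auto. apply in_or_app.
 destruct Hvs as [Hv|Hv]; [left|right]; apply filter_In; split; auto; apply pb_spec; subst; auto. Qed.

Lemma cnt_le_nbr E S (P : edge -> Prop) : NoDup E ->
  (forall e, In e E -> P e -> exists s v, In s S /\ incident v s /\ incident v e) ->
  (cnt P E <= length (nbr E S))%nat.
Proof. intros Hnd H. apply NoDup_incl_length. apply NoDup_filter; auto.
 intros e He. apply filter_In in He. destruct He as [A B]. apply (proj1 (pb_spec _)) in B.
 destruct (H e A B) as [s [v [C [D F]]]]. eapply nbr_in; eauto. Qed.

Lemma cnt_filter_len {A} (P : A -> Prop) l : cnt P l = length (filter (fun x => pb (P x)) l).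
Proof. reflexivity. Qed.

Lemma prod_cmp {A} (E : list A) (psi phi : A -> R) (P Q : A -> Prop) kap : 0 <= kap ->
  (forall e, In e E -> 0 <= psi e /\ 0 <= phi e /\ (P e -> psi e <= kap * phi e) /\
     (~ P e -> Q e -> psi e <= 2 * phi e) /\ (~ P e -> ~ Q e -> psi e <= phi e)) ->
  prodR (map psi E) <= kap ^ (cnt P E) * 2 ^ (cnt (fun e => ~ P e /\ Q e) E) * prodR (map phi E).
Proof. intros Hk. induction E as [|a E IH]; intros H; simpl. lra.
 rewrite !cnt_cons. specialize (IH (fun e He => H e (or_intror He))).
 destruct (H a (or_introl eq_refl)) as [A1 [A2 [A3 [A4 A5]]]].
 assert (Hp : 0 <= prodR (map psi E)) by (apply prodR_nonneg; intros x Hx; apply in_map_iff in Hx; destruct Hx as [y [<- Hy]]; apply H; simpl; auto).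
 assert (Hq : 0 <= prodR (map phi E)) by (apply prodR_nonneg; intros x Hx; apply in_map_iff in Hx; destruct Hx as [y [<- Hy]]; apply H; simpl; auto).
 set (K := kap ^ cnt P E * 2 ^ cnt (fun e => ~ P e /\ Q e) E) in *.
 assert (HK : 0 <= K) by (unfold K; apply Rmult_le_pos; apply pow_le; lra).
 unfold pb. destruct (excluded_middle_informative (P a)) as [Pa|Pa].
 - destruct (excluded_middle_informative (~ P a /\ Q a)) as [C|C]; [tauto|]. simpl.
   specialize (A3 Pa). replace (kap * kap ^ cnt P E * 2 ^ cnt (fun e => ~ P e /\ Q e) E) with (kap * K) by (unfold K; ring).
   apply Rle_trans with ((kap * phi a) * prodR (map psi E)). apply Rmult_le_compat_r; auto.
   replace (kap * K * (phi a * prodR (map phi E))) with ((kap * phi a) * (K * prodR (map phi E))) by ring.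
   apply Rmult_le_compat_l; auto. nra.
 - destruct (excluded_middle_informative (~ P a /\ Q a)) as [C|C]; simpl.
   + specialize (A4 Pa (proj2 C)). replace (kap ^ cnt P E * (2 * 2 ^ cnt (fun e => ~ P e /\ Q e) E)) with (2 * K) by (unfold K; ring).
     apply Rle_trans with ((2 * phi a) * prodR (map psi E)). apply Rmult_le_compat_r; auto.
     replace (2 * K * (phi a * prodR (map phi E))) with ((2 * phi a) * (K * prodR (map phi E))) by ring.
     apply Rmult_le_compat_l; auto. nra.
   + assert (~ Q a) by tauto. specialize (A5 Pa H0). fold K.
     apply Rle_trans with (phi a * prodR (map psi E)). apply Rmult_le_compat_r; auto.
     replace (K * (phi a * prodR (map phi E))) with (phi a * (K * prodR (map phi E))) by ring.
     apply Rmult_le_compat_l; auto. Qed.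

Lemma exp_sum {A} (a : R) (f : A -> R) l : exp (- (a * sumR (map f l))) = prodR (map (fun x => exp (- (a * f x))) l).
Proof. induction l; simpl. rewrite Rmult_0_r, Ropp_0; apply exp_0. rewrite <- IHl, <- exp_plus. f_equal; ring. Qed.

Lemma pow_le1 y k : 0 <= y <= 1 -> y ^ k <= 1.
Proof. intros H; induction k; simpl. lra. pose proof (pow_le y k (proj1 H)). nra. Qed.

Lemma pow_bound y (D ns nb : nat) : 0 <= y <= 1 -> (1 <= ns)%nat -> (nb <= 2 * D * ns)%nat ->
  (y / 4 ^ D) ^ ns * 2 ^ nb <= y.
Proof. intros Hy Hns Hnb.
 assert (H4 : 0 < 4 ^ D) by (apply pow_lt; lra).
 assert (H1 : 2 ^ nb <= (4 ^ D) ^ ns).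
 { replace ((4 ^ D) ^ ns) with (2 ^ (2 * D * ns)). apply Rle_pow; [lra|auto].
   rewrite (pow_mult 2 (2*D) ns). f_equal. rewrite (pow_mult 2 2 D). f_equal. simpl; lra. }
 assert (H0 : 0 <= (y / 4 ^ D) ^ ns) by (apply pow_le; unfold Rdiv; apply Rmult_le_pos; [lra|apply Rlt_le, Rinv_0_lt_compat; auto]).
 apply Rle_trans with ((y / 4 ^ D) ^ ns * (4 ^ D) ^ ns). apply Rmult_le_compat_l; auto.
 rewrite <- Rpow_mult_distr. replace (y / 4 ^ D * 4 ^ D) with y by (field; lra).
 destruct ns; [lia|]. simpl. pose proof (pow_le1 y ns Hy). nra. Qed.

Lemma opt_sum (f : Z3 -> R) (r M : R) : 0 <= r -> (forall g, 0 <= f g) ->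
  (forall L, NoDup L -> sumR (map f L) <= M) ->
  forall GL, NoDup GL -> sumR (map (fun o => match o with None => r | Some g => f g end) GL) <= r + M.
Proof. intros Hr Hf HM GL HGL.
 assert (Gen : exists L, NoDup L /\ (forall g, In g L -> In (Some g) GL) /\
     sumR (map (fun o => match o with None => r | Some g => f g end) GL) <= indic (In None GL) * r + sumR (map f L)).
 { induction HGL as [|a GL Ha Hnd IH].
   - exists nil. simpl. rewrite indic_0 by auto. split. constructor. split. intros; contradiction. lra.
   - destruct IH as [L [HL [Hsub HS]]].
     destruct a as [g|].
     + exists (g::L). split. constructor; [intro Hin; apply Ha; apply Hsub; auto | auto].
       split. intros g' [<-|Hg']; simpl; auto.
       replace (indic (In None (Some g :: GL))) with (indic (In None GL)).
       simpl. lra. f_equal. apply propositional_extensionality. simpl. split; auto. intros [H|H]; [discriminate|auto].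
     + exists L. split; auto. split. intros g' Hg'; simpl; auto. simpl. rewrite indic_1 by (simpl; auto). rewrite indic_0 in HS by auto. lra. }
 destruct Gen as [L [HL [_ HS]]]. specialize (HM L HL). pose proof (indic_bounds (In None GL)). nra.
Qed.

Definition bdry (E : list edge) (J : list Z3) (e : edge) : Prop :=
  exists s v, in_supp E J s /\ incident v s /\ incident v e.

Definition st (E : list edge) (J : list Z3) (e : edge) : option (option Z3) :=
  if excluded_middle_informative (in_supp E J e) then Some (Some (lk E J e))
  else if excluded_middle_informative (bdry E J e) then Some None else None.

Definition qo (G : lattice3) (b1 : R) (o : option Z3) : R :=
  match o with None => 1/2 | Some g => qs G b1 g end.

Lemma in_supp_E E J e : in_supp E J e -> In e E.
Proof. intros [g [H _]]. apply in_combine_l in H; auto. Qed.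

Lemma esc E L o J1 J2 : In J1 L -> In J2 L -> (forall J, In J L -> is_J E J /\ in_supp E J o) ->
  (exists f, in_supp E J2 f /\ ~ in_supp E J1 f) ->
  exists x a b, In x E /\ st E J1 x = Some a /\ st E J2 x = Some b /\ a <> b.
Proof. intros H1 H2 HJ [f [Hf2 Hf1]].
 destruct (HJ J1 H1) as [_ Ho1]. destruct (HJ J2 H2) as [[_ [_ Hcon]] Ho2].
 destruct (Hcon (Defs.tail o) (Defs.tail f)) as [l Hw].
 exists o; split; auto; left; reflexivity. exists f; split; auto; left; reflexivity.
 destruct (walk_escape (in_supp E J1) (in_supp E J2) l (Defs.tail o) (Defs.tail f)) as [h [Hh2 [Hh1 Hb]]]; auto.
 exists o; split; auto; left; reflexivity. exists f; repeat split; auto; left; reflexivity.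
 exists h, None, (Some (lk E J2 h)). split. eapply in_supp_E; eauto.
 unfold st. destruct (excluded_middle_informative (in_supp E J1 h)); [contradiction|].
 destruct (excluded_middle_informative (bdry E J1 h)); [|contradiction].
 destruct (excluded_middle_informative (in_supp E J2 h)); [|contradiction].
 repeat split; auto. discriminate. Qed.

Lemma cross_J E L o : NoDup E -> (forall J, In J L -> is_J E J /\ in_supp E J o) -> cross (st E) E L.
Proof. intros HE HJ J J' HJL HJ'L Hne.
 destruct (classic (exists f, in_supp E J' f /\ ~ in_supp E J f)) as [C1|C1].
 { eapply esc; eauto. }
 destruct (classic (exists f, in_supp E J f /\ ~ in_supp E J' f)) as [C2|C2].
 { destruct (esc E L o J' J) as [x [a [b [A [B [C D]]]]]]; auto. exists x, b, a; auto. }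
 destruct (HJ J HJL) as [[[HlJ _] _] _]. destruct (HJ J' HJ'L) as [[[HlJ' _] _] _].
 destruct (classic (exists e, In e E /\ lk E J e <> lk E J' e)) as [[e [He Hd]]|C3].
 2:{ exfalso. apply Hne. apply lk_ext with E; auto. intros e He. apply NNPP. intro; apply C3; eauto. }
 assert (Hs : in_supp E J e /\ in_supp E J' e).
 { destruct (classic (lk E J e = z3zero)) as [Z|Z].
   - assert (in_supp E J' e) by (apply in_supp_lk; auto; split; auto; congruence).
     split; auto. apply NNPP; intro; apply C1; eauto.
   - assert (in_supp E J e) by (apply in_supp_lk; auto).
     split; auto. apply NNPP; intro; apply C2; eauto. }
 exists e, (Some (lk E J e)), (Some (lk E J' e)). unfold st.
 destruct (excluded_middle_informative (in_supp E J e)); [|tauto].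
 destruct (excluded_middle_informative (in_supp E J' e)); [|tauto].
 repeat split; auto. congruence. Qed.

Lemma qs_nonneg G b g : 0 <= qs G b g.
Proof. unfold qs. destruct (excluded_middle_informative (g = z3zero)). lra. apply Rlt_le, exp_pos. Qed.
Lemma qo_nonneg G b o : 0 <= qo G b o.
Proof. destruct o; simpl. apply qs_nonneg. lra. Qed.

Lemma in_len1 {A} (x : A) l : In x l -> (1 <= length l)%nat.
Proof. destruct l; simpl; [tauto|lia]. Qed.

Lemma core G Gr eta b1 c6v c7 beta D :
 0 < eta -> (forall g, g <> z3zero -> eta <= gnorm G g) ->
 (forall L, NoDup L -> sumR (map (qs G b1) L) <= 1/2) ->
 (forall (v : R3) (L : list edge), NoDup L -> (forall e, In e L -> is_edge Gr e /\ incident v e) -> (length L <= D)%nat) ->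
 0 <= b1 -> b1 <= beta * c6v -> 0 <= beta * c7 ->
 exp (- ((beta * c6v - b1) * eta)) * 4 ^ D <= exp (- (beta * c7)) ->
 forall E, finite_edge_set Gr E -> forall o, In o E -> forall L, NoDup L ->
 (forall J, In J L -> is_J E J /\ in_supp E J o) ->
 sumR (map (fun J => exp (- (beta * c6v * size G Gr E J))) L) <= exp (- (beta * c7)).
Proof. intros Heta Hge Hls HD Hb1 Hbc Hc7 H8 E HE o Ho L HL HJ.
 set (y := exp (- (beta * c7))) in *.
 assert (Hy : 0 <= y <= 1). { split. apply Rlt_le, exp_pos. unfold y. rewrite <- exp_0. apply exp_le. lra. }
 assert (Hwt : sumR (map (wt (qo G b1) (st E) E) L) <= 1).
 { apply cross_sum; auto. apply qo_nonneg.
   intros GL HGL. pose proof (opt_sum (qs G b1) (1/2) (1/2) ltac:(lra) (qs_nonneg G b1) Hls GL HGL).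
   unfold qo. lra.
   eapply cross_J; eauto. apply HE. }
 apply Rle_trans with (sumR (map (fun J => y * wt (qo G b1) (st E) E J) L)).
 2:{ rewrite sumR_map_scal. nra. }
 apply sumR_map_le. intros J HJL. destruct (HJ J HJL) as [[[HlJ _] _] HoJ]. destruct HE as [HEnd HEe].
 assert (Hsz : l1norm G J <= size G Gr E J) by (unfold size; pose proof (pos_INR (diam Gr E J)); lra).
 apply Rle_trans with (exp (- (beta * c6v * l1norm G J))). { apply exp_le. nra. }
 rewrite (l1_lk G E J HEnd HlJ), exp_sum.
 set (kap := y / 4 ^ D).
 assert (H4 : 0 < 4 ^ D) by (apply pow_lt; lra).
 assert (Hkap : 0 <= kap) by (unfold kap, Rdiv; apply Rmult_le_pos; [lra|apply Rlt_le, Rinv_0_lt_compat; auto]).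
 eapply Rle_trans.
 { apply (prod_cmp E _ (fun e => fw (qo G b1) (st E J e)) (in_supp E J) (bdry E J) kap Hkap).
   intros e He. split. apply Rlt_le, exp_pos. split. destruct (st E J e); simpl. apply qo_nonneg. lra.
   unfold st. split; [|split].
   - intros HP. destruct (excluded_middle_informative (in_supp E J e)); [|contradiction]. simpl.
     apply in_supp_lk in HP; auto. destruct HP as [_ Hnz]. unfold qs.
     destruct (excluded_middle_informative (lk E J e = z3zero)); [contradiction|].
     set (nn := gnorm G (lk E J e)). assert (Hn : eta <= nn) by (apply Hge; auto).
     assert (A : exp (-((beta*c6v - b1)*eta)) <= kap).
     { unfold kap. apply Rmult_le_reg_r with (4^D); auto. unfold Rdiv; rewrite Rmult_assoc, Rinv_l; lra. }
     assert (B : exp (-((beta*c6v - b1)*nn)) <= exp (-((beta*c6v - b1)*eta))) by (apply exp_le; nra).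
     replace (- (beta * c6v * nn)) with (-((beta*c6v - b1)*nn) + - b1 * nn) by ring. rewrite exp_plus.
     apply Rmult_le_compat_r. apply Rlt_le, exp_pos. lra.
   - intros HP HQ. destruct (excluded_middle_informative (in_supp E J e)); [contradiction|].
     destruct (excluded_middle_informative (bdry E J e)); [|contradiction]. simpl.
     assert (lk E J e = z3zero). { apply NNPP; intro; apply HP; apply in_supp_lk; auto. }
     rewrite H, gnorm_zero, Rmult_0_r, Ropp_0, exp_0. lra.
   - intros HP HQ. destruct (excluded_middle_informative (in_supp E J e)); [contradiction|].
     destruct (excluded_middle_informative (bdry E J e)); [contradiction|]. simpl.
     assert (lk E J e = z3zero). { apply NNPP; intro; apply HP; apply in_supp_lk; auto. }
     rewrite H, gnorm_zero, Rmult_0_r, Ropp_0, exp_0. lra. }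
 fold (wt (qo G b1) (st E) E J).
 assert (Hw0 : 0 <= wt (qo G b1) (st E) E J) by (apply wt_nonneg; apply qo_nonneg).
 apply Rmult_le_compat_r; auto.
 apply pow_bound; auto.
 - apply (in_len1 o). apply filter_In. split; auto. apply pb_spec; auto.
 - eapply Nat.le_trans. apply (cnt_le_nbr E (filter (fun e => pb (in_supp E J e)) E)); auto.
   intros e He [_ [s [v [Hs [Hvs Hve]]]]]. exists s, v. split; auto. apply filter_In; split. eapply in_supp_E; eauto. apply pb_spec; auto.
   apply (nbr_len Gr D E); auto. split; auto.
Qed.

Lemma le_sum_in {A} (h : A -> R) f l : In f l -> (forall x, 0 <= h x) -> h f <= sumR (map h l).
Proof. induction l; simpl; intros H Hh; [contradiction|]. destruct H as [->|H].
 pose proof (sumR_map_nonneg h l (fun x _ => Hh x)). lra. specialize (IHl H Hh). pose proof (Hh a). lra. Qed.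

Lemma sumR_const {A} (c : R) (l : list A) : sumR (map (fun _ => c) l) = INR (length l) * c.
Proof. induction l; simpl. lra. rewrite IHl. destruct (length l); simpl; lra. Qed.

Lemma Kw_le G Gr c eta c5 beta E J : 0 < beta -> 0 < c5 ->
  (forall g, g <> z3zero -> eta <= gnorm G g) ->
  Kw G Gr c eta beta E J * exp (aw c5 eta beta J) <= exp (- (beta * c6 c eta c5 * size G Gr E J)).
Proof. intros Hb Hc5 Hge. unfold Kw, aw, c6. rewrite <- exp_plus. apply exp_le.
 pose proof (l1_ge G eta J Hge). assert (l1norm G J <= size G Gr E J) by (unfold size; pose proof (pos_INR (diam Gr E J)); lra).
 assert (eta * INR (supp_card J) <= size G Gr E J) by lra.
 assert (beta * c5 * (eta * INR (supp_card J)) <= beta * c5 * size G Gr E J) by (apply Rmult_le_compat_l; nra).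
 nra. Qed.

Theorem lemma3p3 (G : lattice3) (eta : R) (Gr : lgraph) (c c5 : R) :
  rank3 G -> is_min_norm G eta ->
  periodic_lattice_graph Gr -> bounded_degree Gr ->
  0 < c -> 0 < c5 -> c5 < c4 c eta ->
  exists c7 : R, 0 < c7 /\
  exists beta0 : R, forall beta : R, beta0 < beta ->
    (forall E, finite_edge_set Gr E -> forall o, In o E ->
       forall L : list (list Z3), NoDup L ->
         (forall J, In J L -> is_J E J /\ in_supp E J o) ->
         sumR (map (fun J => exp (- (beta * c6 c eta c5 * size G Gr E J))) L)
           <= exp (- (beta * c7)))
    /\
    (forall E, finite_edge_set Gr E ->
       forall Jt : list (list Z3), NoDup Jt -> (forall J, In J Jt -> is_J E J) ->
       forall o, In o E ->
         sumR (map (fun J => indic (in_supp E J o) *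
                   (Kw G Gr c eta beta E J * exp (aw c5 eta beta J))) Jt)
           <= exp (- (beta * c7)))
    /\
    (forall E, finite_edge_set Gr E ->
       forall Jt : list (list Z3), NoDup Jt -> (forall J, In J Jt -> is_J E J) ->
       forall I, In I Jt ->
         sumR (map (fun J => Kw G Gr c eta beta E J * indic (incompat E I J) *
                   exp (aw c5 eta beta J)) Jt)
           <= aw c5 eta beta I).
Proof.
 intros HG Heta _ [D HD] Hc Hc5 Hc54.
 destruct (lattice_sum G HG) as [b1 [Hb1 Hls]].
 destruct (gnorm_lb G HG) as [al [Hal Hlb]].
 destruct Heta as [[k0 [Hk0 Hg0]] Hge].
 assert (Heta : 0 < eta). { pose proof (Hlb k0). pose proof (zn_ge1 k0 Hk0). nra. }
 set (c6v := c6 c eta c5).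
 assert (Hc6 : 0 < c6v) by (unfold c6v, c6; lra).
 set (c7 := c6v * eta / 2).
 exists c7. split. unfold c7; apply Rmult_lt_0_compat; [apply Rmult_lt_0_compat|]; lra.
 set (P4D := 4 ^ D).
 assert (HP4 : 0 < P4D) by (apply pow_lt; lra).
 assert (HDp : 0 <= INR D) by apply pos_INR.
 set (t1 := b1 / c6v). set (t2 := 2 * (P4D + b1 * eta) / (c6v * eta)). set (t3 := 2 * INR D / (c5 * eta)).
 assert (Ht1 : 0 <= t1) by (unfold t1; apply Rlt_le, Rdiv_lt_0_compat; lra).
 assert (Ht2 : 0 <= t2) by (unfold t2; apply Rlt_le, Rdiv_lt_0_compat; [nra|nra]).
 assert (Ht3 : 0 <= t3) by (unfold t3, Rdiv; apply Rmult_le_pos; [lra|apply Rlt_le, Rinv_0_lt_compat; nra]).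
 exists (1 + t1 + t2 + t3). intros beta Hbeta.
 assert (Hbp : 0 < beta) by lra.
 assert (B1 : b1 <= beta * c6v).
 { assert (t1 < beta) by lra. unfold t1 in H. apply Rlt_le. replace b1 with (b1 / c6v * c6v) by (field; lra).
   apply Rmult_lt_compat_r; lra. }
 assert (B2 : P4D + b1 * eta < beta * c6v * eta / 2).
 { assert (t2 < beta) by lra. unfold t2 in H.
   replace (P4D + b1 * eta) with (2 * (P4D + b1 * eta) / (c6v * eta) * (c6v * eta) / 2) by (field; lra).
   unfold Rdiv at 2. apply Rmult_lt_compat_r. lra. replace (beta * c6v * eta) with (beta * (c6v * eta)) by ring.
   apply Rmult_lt_compat_r; nra. }
 assert (B3 : 2 * INR D <= beta * c5 * eta).
 { assert (t3 < beta) by lra. unfold t3 in H. apply Rlt_le.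
   replace (2 * INR D) with (2 * INR D / (c5 * eta) * (c5 * eta)) by (field; lra).
   replace (beta * c5 * eta) with (beta * (c5 * eta)) by ring. apply Rmult_lt_compat_r; nra. }
 assert (Hc7 : 0 <= beta * c7) by (unfold c7; apply Rmult_le_pos; [lra|]; apply Rlt_le, Rmult_lt_0_compat; [apply Rmult_lt_0_compat|]; lra).
 assert (H8 : exp (- ((beta * c6v - b1) * eta)) * 4 ^ D <= exp (- (beta * c7))).
 { fold P4D. set (tt := beta * c6v * eta / 2 - b1 * eta).
   assert (P4D <= exp tt) by (pose proof (exp_ineq1_le tt); unfold tt in *; lra).
   apply Rle_trans with (exp (- ((beta * c6v - b1) * eta)) * exp tt).
   apply Rmult_le_compat_l; auto. apply Rlt_le, exp_pos.
   rewrite <- exp_plus. apply exp_le. unfold tt, c7. lra. }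
 assert (Core : forall E, finite_edge_set Gr E -> forall o, In o E ->
       forall L : list (list Z3), NoDup L ->
         (forall J, In J L -> is_J E J /\ in_supp E J o) ->
         sumR (map (fun J => exp (- (beta * c6v * size G Gr E J))) L) <= exp (- (beta * c7))).
 { intros E HE o Ho L HL HJL. exact (core G Gr eta b1 c6v c7 beta D Heta Hge Hls HD (Rlt_le _ _ Hb1) B1 Hc7 H8 E HE o Ho L HL HJL). }
 assert (Hy : 0 <= exp (- (beta * c7)) <= 1). { split. apply Rlt_le, exp_pos. rewrite <- exp_0. apply exp_le. lra. }
 assert (C2 : forall E, finite_edge_set Gr E ->
       forall Jt : list (list Z3), NoDup Jt -> (forall J, In J Jt -> is_J E J) ->
       forall o, In o E ->
         sumR (map (fun J => indic (in_supp E J o) *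
                   (Kw G Gr c eta beta E J * exp (aw c5 eta beta J))) Jt)
           <= exp (- (beta * c7))).
 { intros E HE Jt HJt HJ o Ho.
   apply Rle_trans with (sumR (map (fun J => indic (in_supp E J o) * exp (- (beta * c6v * size G Gr E J))) Jt)).
   - apply sumR_map_le. intros J _. apply Rmult_le_compat_l. apply indic_bounds. apply Kw_le; auto.
   - rewrite sumR_filter. apply (Core E HE o Ho). apply NoDup_filter; auto.
     intros J HJf. apply filter_In in HJf. destruct HJf as [A B]. split; auto. apply (proj1 (pb_spec _)) in B; auto. }
 split; [|split]; auto.
 intros E HE Jt HJt HJ I HI.
 set (A := nbr E (filter (fun e => pb (in_supp E I e)) E)).
 set (X := fun J => Kw G Gr c eta beta E J * exp (aw c5 eta beta J)).
 assert (HX : forall J, 0 <= X J) by (intros; unfold X, Kw; apply Rmult_le_pos; apply Rlt_le, exp_pos).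
 apply Rle_trans with (sumR (map (fun J => sumR (map (fun f => indic (in_supp E J f) * X J) A)) Jt)).
 { apply sumR_map_le. intros J _. replace (Kw G Gr c eta beta E J * indic (incompat E I J) * exp (aw c5 eta beta J)) with (indic (incompat E I J) * X J) by (unfold X; ring).
   destruct (classic (incompat E I J)) as [Hi|Hi].
   - rewrite indic_1 by auto. destruct Hi as [e [f [v [He [Hf [Hve Hvf]]]]]].
     assert (Hin : In f A). { apply (nbr_in E _ f e v). eapply in_supp_E; eauto. apply filter_In; split. eapply in_supp_E; eauto. apply pb_spec; auto. auto. auto. }
     eapply Rle_trans; [|apply (le_sum_in (fun f => indic (in_supp E J f) * X J) f A Hin)].
     rewrite indic_1 by auto. lra. intros; pose proof (indic_bounds (in_supp E J x)); pose proof (HX J); nra.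
   - rewrite indic_0 by auto. rewrite Rmult_0_l. apply sumR_map_nonneg. intros; pose proof (indic_bounds (in_supp E J x)); pose proof (HX J); nra. }
 rewrite sumR_swap.
 apply Rle_trans with (sumR (map (fun _ => exp (- (beta * c7))) A)).
 { apply sumR_map_le. intros f Hf. apply C2; auto. unfold A in Hf. unfold nbr in Hf. apply in_flat_map in Hf.
   destruct Hf as [s [_ Hf]]. apply in_app_or in Hf. destruct Hf as [Hf|Hf]; apply filter_In in Hf; tauto. }
 rewrite sumR_const.
 assert (HlA : (length A <= 2 * D * supp_card I)%nat).
 { destruct (HJ I HI) as [[HlI _] _]. rewrite (supp_card_lk E I) by (apply HE || auto). apply (nbr_len Gr D E); auto. }
 apply le_INR in HlA. rewrite mult_INR, mult_INR in HlA. simpl in HlA.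
 unfold aw. pose proof (pos_INR (supp_card I)).
 apply Rle_trans with (INR (length A) * 1). apply Rmult_le_compat_l. apply pos_INR. lra.
 nra.
Qed.
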